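(* Let $G=(N,A)$ be an arc-compressed $s$-$t$ DAG and let $uv\in A$. Then $\mathrm{ext}(uv)$ is a maximal safe sequence of arcs (for arc-path covers) if and only if $uv$ is a leaf in both the arc $s$-dominator tree and the arc $t$-dominator tree of $G$.
   Context: An $s$-$t$ DAG is a directed acyclic multigraph (parallel arcs allowed) with a unique source $s$ and a unique sink $t$ such that every node is reachable from $s$ and every node reaches $t$. It is arc-compressed if no node has both indegree exactly one and outdegree exactly one. An arc $ab$ $s$-dominates an arc $cd$ if $ab=cd$ or every $s$-$c$ path contains $ab$; $ab$ $t$-dominates $cd$ if $ab=cd$ or every $d$-$t$ path contains $ab$; strictly if also $ab\neq cd$. The immediate $s$-dominator of $cd$ is the strict $s$-dominator of $cd$ that is $s$-dominated by all its strict $s$-dominators. The arc $s$-dominator tree has node set $A$ plus an abstract root, the parent of an arc being its immediate $s$-dominator, or the root if it has no strict $s$-dominator; the arc $t$-dominator tree is defined symmetrically. An arc is a leaf if it is the parent of no arc. An arc $ab$ is a $x$-$y$ bridge if every $x$-$y$ path contains it; $\mathrm{ext}(uv)$ is the sequence of $s$-$u$ bridges (in path order), followed by $uv$, followed by the sequence of $v$-$t$ bridges. A sequence of arcs is a list of arcs each of which reaches the next (arc $ab$ reaches $cd$ if there is a $b$-$c$ path); $X$ is a subsequence of $Y$ if every arc of $X$ occurs in $Y$. An arc-path cover is a set of $s$-$t$ paths covering every arc. $X$ is safe if in every arc-path cover it is a subsequence of some path of the cover (sequences in no $s$-$t$ path are unsafe); it is maximal safe if it is safe and not a proper subsequence of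 another safe sequence of arcs. *)

(* Defs.v *)
(* A directed multigraph is given by a finite type of nodes V,
   a finite type of arcs E and endpoint maps src tgt : E -> V
   (parallel arcs = distinct elements of E with equal endpoints). *)
From mathcomp Require Import all_boot.
From mathcomp Require Import boolp.
Set Implicit Arguments. Unset Strict Implicit. Unset Printing Implicit Defensive.

Section Graph.
Variables (V E : finType) (src tgt : E -> V).

Fixpoint is_path (x : V) (p : seq E) (y : V) : bool :=
  match p with
  | [::] => x == y
  | e :: p' => (src e == x) && is_path (tgt e) p' y
  end.

Definition indeg (v : V) : nat := #|[set e | tgt e == v]|.
Definition outdeg (v : V) : nat := #|[set e | src e == v]|.

Definition st_DAG (s t : V) : Prop :=
  (forall x p, is_path x p x -> p = [::]) /\
  indeg s = 0 /\ outdeg t = 0 /\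
  (forall v, indeg v = 0 -> v = s) /\
  (forall v, outdeg v = 0 -> v = t) /\
  (forall v, (exists p, is_path s p v) /\ (exists q, is_path v q t)).

Definition arc_compressed : Prop :=
  forall v, ~ (indeg v = 1 /\ outdeg v = 1).

Definition sdom (s : V) (ab cd : E) : Prop :=
  ab = cd \/ forall p, is_path s p (src cd) -> ab \in p.
Definition tdom (t : V) (ab cd : E) : Prop :=
  ab = cd \/ forall p, is_path (tgt cd) p t -> ab \in p.

Definition strict_sdom s ab cd := sdom s ab cd /\ ab <> cd.
Definition strict_tdom t ab cd := tdom t ab cd /\ ab <> cd.

Definition idom_s s ab cd : Prop :=
  strict_sdom s ab cd /\ forall x, strict_sdom s x cd -> sdom s x ab.
Definition idom_t t ab cd : Prop :=
  strict_tdom t ab cd /\ forall x, strict_tdom t x cd -> tdom t x ab.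

Definition leaf_s s e : Prop := forall cd, ~ idom_s s e cd.
Definition leaf_t t e : Prop := forall cd, ~ idom_t t e cd.

Definition bridge (x y : V) (ab : E) : Prop :=
  forall p, is_path x p y -> ab \in p.

(* ext(uv) : X is the s-(src uv) bridges in path order, then uv, then the
   (tgt uv)-t bridges in path order.  "Path order" is realised by filtering
   an arbitrary s-(src uv) path (resp. (tgt uv)-t path). *)
Definition is_ext (s t : V) (uv : E) (X : seq E) : Prop :=
  exists p q, [/\ is_path s p (src uv), is_path (tgt uv) q t &
    X = [seq e <- p | `[< bridge s (src uv) e >]] ++
        uv :: [seq e <- q | `[< bridge (tgt uv) t e >]]].

Definition reaches (ab cd : E) : Prop := exists p, is_path (tgt ab) p (src cd).

Definition arc_sequence (X : seq E) : Prop :=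
  forall (e0 : E) i, i.+1 < size X -> reaches (nth e0 X i) (nth e0 X i.+1).

Definition subseqA (X Y : seq E) : Prop := {subset X <= Y}.

Definition st_path (s t : V) (p : seq E) : Prop := is_path s p t.

Definition arc_path_cover (s t : V) (C : seq (seq E)) : Prop :=
  (forall p, p \in C -> st_path s t p) /\ (forall e, exists2 p, p \in C & e \in p).

Definition safe (s t : V) (X : seq E) : Prop :=
  [/\ arc_sequence X,
      (exists p, st_path s t p /\ subseqA X p) &
      forall C, arc_path_cover s t C -> exists2 p, p \in C & subseqA X p].

Definition maximal_safe (s t : V) (X : seq E) : Prop :=
  safe s t X /\ ~ exists Y, [/\ safe s t Y, subseqA X Y & X <> Y].

End Graph.

(* Main.v *)
Require Import Defs.
From mathcomp Require Import all_boot boolp.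
From Stdlib Require Import Classical_Prop Classical_Pred_Type Lia.
From mathcomp Require Import zify.
Set Implicit Arguments. Unset Strict Implicit. Unset Printing Implicit Defensive.

Lemma ip_catI {V E : finType} (src tgt : E -> V) x p1 z p2 y :
  is_path src tgt x p1 z -> is_path src tgt z p2 y -> is_path src tgt x (p1 ++ p2) y.
Proof.
elim: p1 x => [|e p1 IH] x /=; first by move/eqP->.
by case/andP=> -> H1 H2; rewrite (IH _ H1 H2).
Qed.

Lemma ip_catE {V E : finType} (src tgt : E -> V) x p1 p2 y :
  is_path src tgt x (p1 ++ p2) y -> exists z, is_path src tgt x p1 z /\ is_path src tgt z p2 y.
Proof.
elim: p1 x => [|e p1 IH] x /=; first by move=> H; exists x; rewrite eqxx.
case/andP=> /eqP-> /IH [z [H1 H2]]; exists z; by rewrite eqxx H1.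
Qed.

Lemma ip_split {V E : finType} (src tgt : E -> V) x p1 e p2 y :
  is_path src tgt x (p1 ++ e :: p2) y ->
  is_path src tgt x p1 (src e) /\ is_path src tgt (tgt e) p2 y.
Proof.
by case/ip_catE=> z [H1 /= /andP [/eqP Hz H2]]; subst z.
Qed.

Lemma ip_join {V E : finType} (src tgt : E -> V) x p1 e p2 y :
  is_path src tgt x p1 (src e) -> is_path src tgt (tgt e) p2 y ->
  is_path src tgt x (p1 ++ e :: p2) y.
Proof.
move=> H1 H2; apply: (ip_catI H1); by rewrite /= eqxx.
Qed.

Definition acyclic {V E : finType} (src tgt : E -> V) :=
  forall x p, is_path src tgt x p x -> p = [::].

Lemma cyc {V E : finType} (src tgt : E -> V) e q :
  acyclic src tgt -> is_path src tgt (tgt e) q (src e) -> False.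
Proof.
move=> ac H; have := ac (src e) (e :: q); rewrite /= eqxx H => /(_ erefl) //.
Qed.

Lemma mem_split {T : eqType} (x : T) p : x \in p -> exists p1 p2, p = p1 ++ x :: p2.
Proof. by case/splitPr=> p1 p2; exists p1, p2. Qed.

Lemma cyc_mem {V E : finType} (src tgt : E -> V) e q y :
  acyclic src tgt -> is_path src tgt (tgt e) q y -> e \in q -> False.
Proof.
move=> ac H /mem_split [q1 [q2 E1]]; subst q.
case/ip_split: H => H _; exact: cyc ac H.
Qed.

Lemma cyc_mem2 {V E : finType} (src tgt : E -> V) e q x :
  acyclic src tgt -> is_path src tgt x q (src e) -> e \in q -> False.
Proof.
move=> ac H /mem_split [q1 [q2 E1]]; subst q.
case/ip_split: H => _ H; exact: cyc ac H.
Qed.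

Lemma reach_trans {V E : finType} (src tgt : E -> V) a b c :
  reaches src tgt a b -> reaches src tgt b c -> reaches src tgt a c.
Proof. move=> [p Hp] [q Hq]; exists (p ++ b :: q); exact: ip_join. Qed.

Definition rb {V E : finType} (src tgt : E -> V) : rel E :=
  fun a b => `[< reaches src tgt a b >].

Lemma rb_trans {V E : finType} (src tgt : E -> V) : transitive (rb src tgt).
Proof. move=> b a c /asboolP H1 /asboolP H2; apply/asboolP; exact: reach_trans H1 H2. Qed.

Lemma rb_irr {V E : finType} (src tgt : E -> V) : acyclic src tgt -> irreflexive (rb src tgt).
Proof. move=> ac a; apply/negP => /asboolP [p Hp]; exact: cyc ac Hp. Qed.

Lemma arcseq_sorted {V E : finType} (src tgt : E -> V) X (e0 : E) :
  arc_sequence src tgt X <-> sorted (rb src tgt) X.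
Proof.
split.
  move=> H; apply/(sortedP e0) => i Hi; apply/asboolP; exact: H.
move/(sortedP e0) => H e1 i Hi; move: (H i Hi) => /asboolP.
by rewrite !(set_nth_default e1 e0) // ltnW.
Qed.

Lemma path_sorted {V E : finType} (src tgt : E -> V) x p y :
  is_path src tgt x p y -> sorted (rb src tgt) p.
Proof.
case: p => [|e p] //= /andP [_]; elim: p e => [|f p IH] e //= /andP [/eqP H1 H2].
rewrite (IH _ H2) andbT; apply/asboolP; exists [::]; by rewrite /= H1.
Qed.

Lemma mem_ext {V E : finType} (src tgt : E -> V) s t a X :
  is_ext src tgt s t a X -> forall e, e \in X <->
   bridge src tgt s (src a) e \/ e = a \/ bridge src tgt (tgt a) t e.
Proof.
move=> [p [q [Hp Hq ->]]] e; rewrite mem_cat in_cons !mem_filter.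
split.
  case/orP=> [/andP [/asboolP H _]|/orP [/eqP H|/andP [/asboolP H _]]]; tauto.
case=> [H|[->|H]]; apply/orP.
- by left; rewrite (H _ Hp) andbT; apply/asboolP.
- by rewrite eqxx; right.
- by right; apply/orP; right; rewrite (H _ Hq) andbT; apply/asboolP.
Qed.

Lemma safe_ext {V E : finType} (src tgt : E -> V) s t a X :
  is_ext src tgt s t a X -> safe src tgt s t X.
Proof.
move=> Hx; have Hm := mem_ext Hx.
move: Hx => [p [q [Hp Hq HX]]].
have HP : is_path src tgt s (p ++ a :: q) t by exact: ip_join.
split.
- apply/(arcseq_sorted _ _ _ a); apply: (subseq_sorted (@rb_trans _ _ src tgt)) (path_sorted HP).
  rewrite HX; apply: cat_subseq; first exact: filter_subseq.
  by rewrite /= eqxx filter_subseq.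
- exists (p ++ a :: q); split => // e /Hm [H|[->|H]]; rewrite mem_cat in_cons.
  + by rewrite (H _ Hp).
  + by rewrite eqxx orbT.
  + by rewrite (H _ Hq) !orbT.
- move=> C [HC Hcov]; have [P HPC HaP] := Hcov a; exists P => //.
  have [P1 [P2 EP]] := mem_split HaP.
  have := HC _ HPC; rewrite /st_path EP => /ip_split [H1 H2].
  move=> e /Hm [H|[->|H]]; rewrite mem_cat in_cons.
  + by rewrite (H _ H1).
  + by rewrite eqxx orbT.
  + by rewrite (H _ H2) !orbT.
Qed.

Lemma not_bridge {V E : finType} (src tgt : E -> V) x y e :
  ~ bridge src tgt x y e -> exists p, is_path src tgt x p y /\ e \notin p.
Proof.
move=> H; apply: NNPP => Hn; apply: H => p Hp; apply: NNPP => He.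
apply: Hn; exists p; split => //; exact/negP.
Qed.

Lemma ext_incl {V E : finType} (src tgt : E -> V) s t uv f e :
  strict_sdom src tgt s uv f ->
  (bridge src tgt s (src uv) e \/ e = uv \/ bridge src tgt (tgt uv) t e) ->
  (bridge src tgt s (src f) e \/ e = f \/ bridge src tgt (tgt f) t e).
Proof.
move=> [[H|Hd] Hne]; first by [].
case=> [Hb|[->|Hb]].
- left => w Hw; have [w1 [w2 Ew]] := mem_split (Hd _ Hw); subst w.
  case/ip_split: Hw => H1 _; by rewrite mem_cat (Hb _ H1).
- by left.
- apply: NNPP => Hn; apply not_or_and in Hn; case: Hn => Hn1 Hn2.
  apply not_or_and in Hn2; case: Hn2 => Hn2 Hn3.
  have [w [Hw Hew]] := not_bridge Hn1; have [q [Hq Heq]] := not_bridge Hn3.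
  have [w1 [w2 Ew]] := mem_split (Hd _ Hw); subst w.
  case/ip_split: Hw => _ H2.
  have := Hb _ (ip_join H2 Hq); rewrite mem_cat in_cons => /orP [H|/orP [/eqP H|H]].
  + by move: Hew; rewrite mem_cat in_cons H !orbT.
  + by [].
  + by rewrite H in Heq.
Qed.

Lemma two_src {V E : finType} (src tgt : E -> V) x q y f0 f1 :
  acyclic src tgt -> is_path src tgt x q y -> f0 \in q -> f1 \in q ->
  src f0 = src f1 -> f0 = f1.
Proof.
move=> ac Hq /mem_split [q1 [q2 Eq]]; subst q; case/ip_split: Hq => H1 H2.
rewrite mem_cat in_cons => /orP [|/orP [/eqP ->//|]] /mem_split [r1 [r2 Er]]; subst.
- case/ip_split: H1 => _ H; move=> E0; rewrite E0 in H; case: (cyc ac H).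
- case/ip_split: H2 => H _; move=> E0; rewrite -E0 in H; case: (cyc ac H).
Qed.

Lemma extend_arc {V E : finType} (src tgt : E -> V) s t uv cd :
  acyclic src tgt -> (forall v, exists p, is_path src tgt s p v) ->
  (forall v, exists q, is_path src tgt v q t) -> arc_compressed src tgt ->
  strict_sdom src tgt s uv cd ->
  exists f, strict_sdom src tgt s uv f /\ ~ bridge src tgt (tgt uv) t f /\
            ~ bridge src tgt s (src uv) f.
Proof.
move=> ac rs rt comp [[H|Hd] Hne]; first by [].
have [p Hp] := rs (src cd).
have [p1 [p2 Ep]] := mem_split (Hd _ Hp); subst p; case/ip_split: Hp => Hp1 Hp2.
have C : forall w, is_path src tgt s w (tgt uv) -> uv \in w.
  move=> w Hw; apply/negPn/negP => Hn.
  have := Hd _ (ip_catI Hw Hp2); rewrite mem_cat (negbTE Hn) /= => Hin.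
  exact: cyc_mem ac Hp2 Hin.
have [f0 Hf0] : exists f0, src f0 = tgt uv.
  case: p2 Hp2 => [|f0 p2] /= H; [exists cd; by rewrite (eqP H) | exists f0; by case/andP: H => /eqP].
have Hin : [set e | tgt e == tgt uv] = [set uv].
  apply/setP => g; rewrite !inE; apply/idP/idP => [/eqP Hg| /eqP ->//].
  apply/eqP; apply: NNPP => Hne'.
  have [w Hw] := rs (src g).
  have Hw' : is_path src tgt s (w ++ [:: g]) (tgt uv).
    by apply: (ip_catI Hw); rewrite /= eqxx Hg eqxx.
  have := C _ Hw'; rewrite mem_cat in_cons in_nil orbF => /orP [Hu|/eqP Hu]; last by apply: Hne'.
  have [w1 [w2 Ew]] := mem_split Hu; subst w; case/ip_split: Hw => _ H2.
  have : is_path src tgt (tgt uv) (w2 ++ [:: g]) (tgt uv).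
    by apply: (ip_catI H2); rewrite /= eqxx Hg eqxx.
  by move/ac/eqP; rewrite cats1 -size_eq0 size_rcons.
have Hind : indeg tgt (tgt uv) = 1 by rewrite /indeg Hin cards1.
have Hout : outdeg src (tgt uv) <> 1 by move=> H; apply: (comp (tgt uv)).
have [f1 [Hf1 Hne01]] : exists f1, src f1 = tgt uv /\ f1 <> f0.
  apply: NNPP => Hn; apply: Hout; rewrite /outdeg.
  suff -> : [set e | src e == tgt uv] = [set f0] by rewrite cards1.
  apply/setP => g; rewrite !inE; apply/idP/idP => [/eqP Hg|/eqP ->]; last by rewrite Hf0.
  apply/eqP; apply: NNPP => Hg0; apply: Hn; by exists g.
have Hsd : forall f, src f = tgt uv -> strict_sdom src tgt s uv f.
  move=> f Hf; split; first by right => w; rewrite Hf; exact: C.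
  move=> Huv; subst f.
  have := ac (src uv) [:: uv]; rewrite /= eqxx Hf eqxx => /(_ erefl) //.
have Hnb : forall f, src f = tgt uv -> ~ bridge src tgt s (src uv) f.
  move=> f Hf Hb; have [w Hw] := rs (src uv); have Hfw := Hb _ Hw.
  have [w1 [w2 Ew]] := mem_split Hfw; subst w; case/ip_split: Hw => _ H2.
  have : is_path src tgt (tgt f) (w2 ++ [:: uv]) (src f).
    by apply: (ip_catI H2); rewrite /= eqxx Hf eqxx.
  exact: cyc ac.
have [q Hq] := rt (tgt uv).
case: (classic (bridge src tgt (tgt uv) t f0)) => Hb0.
- exists f1; split; [exact: Hsd | split; [|exact: Hnb]].
  move=> Hb1; apply: Hne01; apply: (two_src ac Hq (Hb1 _ Hq) (Hb0 _ Hq)).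
  by rewrite Hf1 Hf0.
- exists f0; split; [exact: Hsd | split; [exact: Hb0|exact: Hnb]].
Qed.

Lemma leaf_nodom {V E : finType} (src tgt : E -> V) s uv :
  acyclic src tgt -> (forall v, exists p, is_path src tgt s p v) ->
  leaf_s src tgt s uv -> forall f, ~ strict_sdom src tgt s uv f.
Proof.
move=> ac rs leaf f Hf.
have [p Hp] := rs (src f).
pose P := p ++ [:: f].
have HP : is_path src tgt s P (tgt f) by apply: (ip_join Hp); exact: eqxx.
suff H : forall n A g B, size A < n -> P = A ++ g :: B ->
    strict_sdom src tgt s uv g -> sdom src tgt s g f -> False.
  by apply: (H (size p).+1 p f [::]) => //; left.
elim=> [|n IH] A g B // Hs EP Hg Hgf.
apply: (leaf g); split; first exact: Hg.
move=> x Hx; apply: NNPP => Hnd.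
apply not_or_and in Hnd; case: Hnd => Hxuv Hnd.
have [r [Hr Hxr]] := not_bridge Hnd.
move: HP; rewrite EP => /ip_split [HA _].
case: Hg => [[Heq|Hd] Hne]; first by [].
have [A1 [M EA]] := mem_split (Hd _ HA); subst A.
case/ip_split: HA => _ HM.
case: Hx => [[Heq|Hdx] Hnex]; first by [].
have : x \in r ++ uv :: M by apply: Hdx; exact: ip_join Hr HM.
rewrite mem_cat in_cons (negbTE Hxr) /= => /orP [/eqP //|HxM].
have [M1 [M2 EM]] := mem_split HxM; subst M.
have [_ HM2] := ip_split HM.
apply: (IH (A1 ++ uv :: M1) x (M2 ++ g :: B)).
- move: Hs; rewrite !size_cat /= size_cat /=; lia.
- by rewrite EP -!catA /= -catA.
- split; last by move=> H; apply: Hxuv.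
  right => w Hw; apply/negPn/negP => Huw.
  have := Hd _ (ip_join Hw HM2).
  rewrite mem_cat (negbTE Huw) in_cons /= => /orP [/eqP H|H]; first by apply: Hxuv.
  apply: (cyc_mem ac HM); by rewrite mem_cat in_cons H !orbT.
- case: Hgf => [Hgf|Hdg]; first by subst g; right.
  right => w Hw; have [w1 [w2 Ew]] := mem_split (Hdg _ Hw); subst w.
  case/ip_split: Hw => H1 _; by rewrite mem_cat (Hdx _ H1).
Qed.

Lemma ip_rev {V E : finType} (src tgt : E -> V) x p y :
  is_path tgt src y (rev p) x = is_path src tgt x p y.
Proof.
elim: p x => [|e p IH] x /=; first by rewrite eq_sym.
rewrite rev_cons -cats1; apply/idP/andP.
- case/ip_catE => z [H1 /= /andP [/eqP Hz /eqP Hx]]; subst z.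
  by split; [rewrite Hx|rewrite -IH].
- case=> /eqP Hx H; apply: (ip_catI (z := tgt e)); first by rewrite IH.
  by rewrite /= eqxx Hx eqxx.
Qed.

Lemma bridge_rev {V E : finType} (src tgt : E -> V) x y e :
  bridge tgt src x y e <-> bridge src tgt y x e.
Proof.
split=> H p Hp; rewrite -mem_rev; apply: H.
- by rewrite ip_rev.
- by rewrite ip_rev.
Qed.

Lemma sdom_rev {V E : finType} (src tgt : E -> V) t a b :
  sdom tgt src t a b <-> tdom src tgt t a b.
Proof.
rewrite /sdom /tdom; split=> [][H|H]; (try by left); right.
- by apply/(bridge_rev src tgt).
- by apply/(bridge_rev src tgt).
Qed.

Lemma strict_rev {V E : finType} (src tgt : E -> V) t a b :
  strict_sdom tgt src t a b <-> strict_tdom src tgt t a b.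
Proof. rewrite /strict_sdom /strict_tdom sdom_rev; tauto. Qed.

Lemma leaf_rev {V E : finType} (src tgt : E -> V) t a :
  leaf_s tgt src t a <-> leaf_t src tgt t a.
Proof.
rewrite /leaf_s /leaf_t /idom_s /idom_t; split=> H cd [H1 H2]; apply: (H cd); split.
- by apply/strict_rev.
- by move=> x /strict_rev /H2 /sdom_rev.
- by apply/strict_rev.
- by move=> x /strict_rev /H2 /sdom_rev.
Qed.

Lemma acyc_rev {V E : finType} (src tgt : E -> V) :
  acyclic src tgt -> acyclic tgt src.
Proof.
move=> ac x p; rewrite -(ip_rev tgt src) => /ac /(congr1 size).
by rewrite size_rev; case: p.
Qed.

Lemma ext_incl_t {V E : finType} (src tgt : E -> V) s t uv f e :
  strict_tdom src tgt t uv f ->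
  (bridge src tgt s (src uv) e \/ e = uv \/ bridge src tgt (tgt uv) t e) ->
  (bridge src tgt s (src f) e \/ e = f \/ bridge src tgt (tgt f) t e).
Proof.
move/strict_rev => H He.
have : bridge tgt src t (tgt uv) e \/ e = uv \/ bridge tgt src (src uv) s e.
  rewrite !(bridge_rev src tgt); tauto.
move/(ext_incl H); rewrite !(bridge_rev src tgt); tauto.
Qed.

Lemma extend_arc_t {V E : finType} (src tgt : E -> V) s t uv cd :
  acyclic src tgt -> (forall v, exists p, is_path src tgt s p v) ->
  (forall v, exists q, is_path src tgt v q t) -> arc_compressed src tgt ->
  strict_tdom src tgt t uv cd ->
  exists f, strict_tdom src tgt t uv f /\ ~ bridge src tgt (tgt uv) t f /\
            ~ bridge src tgt s (src uv) f.
Proof.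
move=> ac rs rt comp /strict_rev H.
have rs' : forall v, exists p, is_path tgt src t p v.
  by move=> v; have [q Hq] := rt v; exists (rev q); rewrite ip_rev.
have rt' : forall v, exists p, is_path tgt src v p s.
  by move=> v; have [q Hq] := rs v; exists (rev q); rewrite ip_rev.
have comp' : arc_compressed tgt src by move=> v [H1 H2]; apply: (comp v).
have [f [Hf [H1 H2]]] := extend_arc (acyc_rev ac) rs' rt' comp' H.
exists f; split; first by apply/strict_rev.
by rewrite -!(bridge_rev src tgt).
Qed.

Lemma leaf_nodom_t {V E : finType} (src tgt : E -> V) t uv :
  acyclic src tgt -> (forall v, exists q, is_path src tgt v q t) ->
  leaf_t src tgt t uv -> forall f, ~ strict_tdom src tgt t uv f.
Proof.
move=> ac rt /leaf_rev L f /strict_rev.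
have rs' : forall v, exists p, is_path tgt src t p v.
  by move=> v; have [q Hq] := rt v; exists (rev q); rewrite ip_rev.
exact: (leaf_nodom (acyc_rev ac) rs' L).
Qed.

Lemma gather {T : finType} {U : eqType} (R : U -> Prop) (Q : T -> U -> Prop) :
  (forall f, exists P, Q f P) -> (forall f P, Q f P -> R P) ->
  exists C : seq U, (forall P, P \in C -> R P) /\ (forall f, exists2 P, P \in C & Q f P).
Proof.
move=> Hex HQR.
suff [C [H1 H2]] : exists C : seq U, (forall P, P \in C -> R P) /\
    (forall f, f \in enum T -> exists2 P, P \in C & Q f P).
  by exists C; split => // f; apply: H2; rewrite mem_enum.
elim: (enum T) => [|f l [C [H1 H2]]]; first by exists [::].
have [P HP] := Hex f; exists (P :: C); split.
- move=> P'; rewrite in_cons => /orP [/eqP ->|]; [exact: HQR HP| exact: H1].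
- move=> g; rewrite in_cons => /orP [/eqP ->|/H2 [P' HP' HQ]].
  + by exists P; rewrite ?in_cons ?eqxx.
  + by exists P'; rewrite ?in_cons ?HP' ?orbT.
Qed.

Lemma ext_exists {V E : finType} (src tgt : E -> V) s t f :
  (forall v, exists p, is_path src tgt s p v) ->
  (forall v, exists q, is_path src tgt v q t) ->
  exists Y, is_ext src tgt s t f Y.
Proof.
move=> rs rt; have [p Hp] := rs (src f); have [q Hq] := rt (tgt f).
by eexists; exists p, q; split.
Qed.

Lemma ext_not_max {V E : finType} (src tgt : E -> V) s t uv X f :
  (forall v, exists p, is_path src tgt s p v) ->
  (forall v, exists q, is_path src tgt v q t) ->
  is_ext src tgt s t uv X ->
  (forall e, (bridge src tgt s (src uv) e \/ e = uv \/ bridge src tgt (tgt uv) t e) ->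
             (bridge src tgt s (src f) e \/ e = f \/ bridge src tgt (tgt f) t e)) ->
  ~ (bridge src tgt s (src uv) f \/ f = uv \/ bridge src tgt (tgt uv) t f) ->
  ~ maximal_safe src tgt s t X.
Proof.
move=> rs rt HX Hinc Hf [_ Hmax].
have [Y HY] := ext_exists f rs rt.
apply: Hmax; exists Y; split.
- exact: safe_ext HY.
- by move=> e /(mem_ext HX) /Hinc /(mem_ext HY).
- move=> EXY; apply: Hf; apply/(mem_ext HX); rewrite EXY; apply/(mem_ext HY).
  by right; left.
Qed.

Theorem theorem8 (V E : finType) (src tgt : E -> V) (s t : V) (uv : E) :
  st_DAG src tgt s t -> arc_compressed src tgt ->
  (exists X, is_ext src tgt s t uv X) /\
  (forall X, is_ext src tgt s t uv X ->
     (maximal_safe src tgt s t X <->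
      leaf_s src tgt s uv /\ leaf_t src tgt t uv)).
Proof.
move=> [ac [_ [_ [_ [_ reach]]]]] comp.
have rs : forall v, exists p, is_path src tgt s p v by move=> v; case: (reach v).
have rt : forall v, exists q, is_path src tgt v q t by move=> v; case: (reach v).
split; first exact: ext_exists.
move=> X HX; have Hm := mem_ext HX; split.
- move=> Hmax; split.
  + move=> cd [Hsd _].
    have [f [Hf [Hnb1 Hnb2]]] := extend_arc ac rs rt comp Hsd.
    apply: (ext_not_max rs rt HX _ _ Hmax).
    * by move=> e; apply: ext_incl Hf.
    * case: Hf => _ Hf; case=> [//|[Heq|//]]; by apply: Hf.
  + move=> cd [Hsd _].
    have [f [Hf [Hnb1 Hnb2]]] := extend_arc_t ac rs rt comp Hsd.
    apply: (ext_not_max rs rt HX _ _ Hmax).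
    * by move=> e; apply: ext_incl_t Hf.
    * case: Hf => _ Hf; case=> [//|[Heq|//]]; by apply: Hf.
- move=> [Ls Lt]; have HXs := safe_ext HX; split => // [[Y [HYs HXY HneXY]]].
  have [e HeY HeX] : exists2 e, e \in Y & e \notin X.
    apply: NNPP => Hn; apply: HneXY.
    apply: (irr_sorted_eq (@rb_trans _ _ src tgt) (rb_irr ac)).
    + by case: HXs => /(arcseq_sorted _ _ _ uv).
    + by case: HYs => /(arcseq_sorted _ _ _ uv).
    + move=> e; apply/idP/idP; first exact: HXY.
      move=> HeY; apply: NNPP => HeX; apply: Hn; exists e => //; exact/negP.
  have He : ~ (bridge src tgt s (src uv) e \/ e = uv \/ bridge src tgt (tgt uv) t e).
    by move/Hm; apply/negP.
  pose Q f P := st_path src tgt s t P /\ f \in P /\ (uv \in P -> e \notin P).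
  pose R P := st_path src tgt s t P /\ (uv \in P -> e \notin P).
  have Hex : forall f, exists P, Q f P.
    move=> f; case: (f =P uv) => [->|Hfu].
    - have [w [Hw Hew]] : exists w, is_path src tgt s w (src uv) /\ e \notin w.
        by apply: not_bridge => H; apply: He; left.
      have [q [Hq Heq]] : exists q, is_path src tgt (tgt uv) q t /\ e \notin q.
        by apply: not_bridge => H; apply: He; right; right.
      exists (w ++ uv :: q); split; first exact: ip_join.
      split; first by rewrite mem_cat in_cons eqxx orbT.
      move=> _; rewrite mem_cat in_cons negb_or (negbTE Hew) negb_or (negbTE Heq) andbT /=.
      by apply/eqP => H; apply: He; right; left.
    - have Hs : ~ bridge src tgt s (src f) uv.
        by move=> H; apply: (leaf_nodom ac rs Ls (f := f)); split; [right|move=> H'; apply: Hfu].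
      have Ht : ~ bridge src tgt (tgt f) t uv.
        by move=> H; apply: (leaf_nodom_t ac rt Lt (f := f)); split; [right|move=> H'; apply: Hfu].
      have [w [Hw Hw']] := not_bridge Hs; have [q [Hq Hq']] := not_bridge Ht.
      exists (w ++ f :: q); split; first exact: ip_join.
      split; first by rewrite mem_cat in_cons eqxx orbT.
      rewrite mem_cat in_cons (negbTE Hw') (negbTE Hq') orbF /= => /eqP H.
      by case: Hfu.
  have [C [HC1 HC2]] := gather (R := R) Hex (fun f P H => conj H.1 H.2.2).
  have Hcov : arc_path_cover src tgt s t C.
    split; first by move=> P /HC1 [].
    by move=> f; have [P HP [_ [HfP _]]] := HC2 f; exists P.
  case: HYs => _ _ /(_ C Hcov) [P HPC HYP].
  have [_ HR] := HC1 _ HPC.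
  have Huv : uv \in P by apply: HYP; apply: HXY; apply/Hm; right; left.
  by move: (HR Huv); rewrite (HYP _ HeY).
Qed.
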